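(* Let $\mathcal F=(A_1,\dots,A_m)$ and $\mathcal F'=(A'_1,\dots,A'_m)$ be objects of $\mathcal{S}h_n(\Lambda_m,\mathbbm{k})$ described as below. Then $$\mathrm{Ext}^0(\mathcal F,\mathcal F')\cong\{(u_1,u_2)\in(\mathrm{End}\,V)^2: A'_ku_1=u_2A_k\text{ for all even }k,\ A'_ku_2=u_1A_k\text{ for all odd }k\},$$ where $(u_1,u_2)$ corresponds to the morphism given on the diagram data by $u_0=u_1$ on the top $V$, $u_k=u_1$ on the $k$-th lower arc for $k$ odd, $u_k=u_2$ for $k$ even, and $v=\begin{pmatrix}u_2&0\\0&u_1\end{pmatrix}$ on $V^2$.
   Context: $\mathbbm{k}$ a field, $\dim V=n$; $P_0=1$, $P_1(a_1)=a_1$, $P_m=P_{m-1}(a_1,\dots,a_{m-1})a_m+P_{m-2}(a_1,\dots,a_{m-2})$. $\Lambda_m$ is the rainbow closure of $\sigma_1^m\in B_2$ with binary Maslov potential; $\mathcal{S}h_n(\Lambda_m,\mathbbm{k})$ is the category of constructible (w.r.t. the front) complexes of sheaves of $\mathbbm{k}$-modules on $\mathbb R^2$ with microsupport in $\Lambda_m$, acyclic for $z\ll 0$, of microlocal rank $n$, modulo acyclics. A tuple $(A_1,\dots,A_m)\in(\mathrm{End}\,V)^m$ with $P_m(A_1,\dots,A_m)$ invertible denotes the sheaf with diagram data: top space $V$ (inside outer cusps), middle space $V^2$ (inside inner cusps), $\psi=(0\ \ 1):V^2\to V$, and maps $\phi_1,\dots,\phi_{m+1}:V\to V^2$ from the $m+1$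 lower braid arcs (each with stalk $V$) such that $\begin{pmatrix}0&1\\1&A_1\end{pmatrix}\cdots\begin{pmatrix}0&1\\1&A_k\end{pmatrix}=\phi_k\oplus\phi_{k+1}$ for $1\le k\le m$. A morphism of such sheaves is a family of maps $u_0$ (top $V$), $v$ (on $V^2$), $u_1,\dots,u_{m+1}$ (on the arcs) commuting with all $\psi$, $\phi_i$. *)

(* Defs.v *)
From HB Require Import structures.
From mathcomp Require Import all_boot all_order all_algebra.
Set Implicit Arguments. Unset Strict Implicit. Unset Printing Implicit Defensive.
Import GRing.Theory.
Local Open Scope ring_scope.

(* V = 'cV[F]_n ; End V = 'M[F]_n ; V^2 = 'cV[F]_(n+n).
   Linear maps act on column vectors by left multiplication: f o g = f *m g. *)

Section Defs.
Variables (F : fieldType) (n : nat).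

(* The (noncommutative) continuant P_m(A_1,...,A_m); A is indexed from 1. *)
Fixpoint cont (A : nat -> 'M[F]_n) (m : nat) : 'M[F]_n :=
  match m with
  | 0 => 1%:M
  | 1 => A 1%N
  | S ((S k) as k1) => cont A k1 *m A m + cont A k
  end.

Definition blk (a : 'M[F]_n) : 'M[F]_(n + n) := block_mx 0 1%:M 1%:M a.

Fixpoint prefix (A : nat -> 'M[F]_n) (k : nat) : 'M[F]_(n + n) :=
  match k with
  | 0 => 1%:M
  | S j => prefix A j *m blk (A k)
  end.

Definition psi : 'M[F]_(n, n + n) := row_mx 0 1%:M.

(* phi_1..phi_{m+1} : V -> V^2 are the diagram data of the sheaf (A_1..A_m):
   (0 1;1 A_1)...(0 1;1 A_k) = phi_k (+) phi_{k+1} for 1 <= k <= m. *)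
Definition diag_data (m : nat) (A : nat -> 'M[F]_n)
    (phi : nat -> 'M[F]_(n + n, n)) : Prop :=
  forall k, (1 <= k <= m)%N -> prefix A k = row_mx (phi k) (phi k.+1).

(* A morphism of diagram data: u0 on the top V, v on V^2, and u on the m+1
   lower arcs (ordinal i : 'I_m.+1 stands for the arc number i+1). *)
Definition is_mor (m : nat) (phi phi' : nat -> 'M[F]_(n + n, n))
    (u0 : 'M[F]_n) (v : 'M[F]_(n + n)) (u : {ffun 'I_m.+1 -> 'M[F]_n}) : Prop :=
  u0 *m psi = psi *m v /\
  forall i : 'I_m.+1, v *m phi i.+1 = phi' i.+1 *m u i.

Definition sol (m : nat) (A A' : nat -> 'M[F]_n) (u1 u2 : 'M[F]_n) : Prop :=
  forall k, (1 <= k <= m)%N ->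
    if odd k then A' k *m u2 = u1 *m A k else A' k *m u1 = u2 *m A k.

Definition mor_of (m : nat) (u1 u2 : 'M[F]_n)
  : 'M[F]_n * 'M[F]_(n + n) * {ffun 'I_m.+1 -> 'M[F]_n} :=
  (u1, block_mx u2 0 0 u1, [ffun i : 'I_m.+1 => if odd i.+1 then u1 else u2]).

End Defs.

(* Main.v *)
Require Import Defs.
From HB Require Import structures.
From mathcomp Require Import all_boot all_order all_algebra zify.
Import GRing.Theory.
Local Open Scope ring_scope.
Set Implicit Arguments. Unset Strict Implicit.
Section H.
Variables (F : fieldType) (n : nat).
Implicit Types (A : nat -> 'M[F]_n) (phi : nat -> 'M[F]_(n + n, n)).

Lemma blkE (a : 'M[F]_n) : blk a = row_mx (col_mx 0 1%:M) (col_mx 1%:M a).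
Proof. by rewrite /blk block_mxEh. Qed.

Lemma dd_base m A phi : (0 < m)%N -> diag_data m A phi ->
  phi 1%N = col_mx 0 1%:M /\ phi 2%N = col_mx 1%:M (A 1%N).
Proof.
move=> m0 H; have := H 1%N; rewrite m0 /= => /(_ isT).
rewrite mul1mx blkE => /eq_row_mx[a b].
by split.
Qed.

Lemma dd_rec m A phi k : diag_data m A phi -> (1 <= k)%N -> (k.+1 <= m)%N ->
  phi k.+2 = phi k + phi k.+1 *m A k.+1.
Proof.
move=> H k1 km.
have h1 := H k.+1; rewrite km /= in h1; have {h1} := h1 isT.
have h0 := H k; rewrite k1 (ltnW km) /= in h0; have {h0} := h0 isT.
move=> h0 h1; move: h1; rewrite /= h0 /blk mul_row_block.
rewrite !mulmx0 !mulmx1 add0r => /eq_row_mx[_ ->].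
by [].
Qed.

Definition blkinv (a : 'M[F]_n) : 'M[F]_(n + n) := block_mx (- a) 1%:M 1%:M 0.

Lemma blkinvK a : blkinv a *m blk a = 1%:M.
Proof.
rewrite /blkinv /blk mulmx_block !mulmx0 !mulmx1 !mul0mx !mul1mx.
by rewrite addr0 add0r addr0 addNr -scalar_mx_block.
Qed.

Lemma prefix_linv A k : exists L, L *m Defs.prefix A k = 1%:M.
Proof.
elim: k => [|k [L HL]]; first by exists 1%:M; rewrite mul1mx.
exists (blkinv (A k.+1) *m L); rewrite /= mulmxA -(mulmxA _ L) HL mulmx1.
exact: blkinvK.
Qed.

Lemma prefix_cancel A k (X : 'M[F]_(n + n, n)) : Defs.prefix A k *m X = 0 -> X = 0.
Proof.
move=> h; have [L HL] := prefix_linv A k.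
by rewrite -(mul1mx X) -HL -mulmxA h mulmx0.
Qed.
End H.

Lemma part1 (F : fieldType) (n m : nat)
    (A A' : nat -> 'M[F]_n) (phi phi' : nat -> 'M[F]_(n + n, n)) u1 u2 :
  (0 < m)%N -> diag_data m A phi -> diag_data m A' phi' -> sol m A A' u1 u2 ->
  forall k, (1 <= k <= m)%N ->
   block_mx u2 0 0 u1 *m phi k = phi' k *m (if odd k then u1 else u2) /\
   block_mx u2 0 0 u1 *m phi k.+1 = phi' k.+1 *m (if odd k.+1 then u1 else u2).
Proof.
move=> m0 H H' S; elim=> [//|k IH] /andP[k1 km].
case: k IH k1 km => [|k] IH _ km.
  have [p1 p2] := dd_base m0 H; have [q1 q2] := dd_base m0 H'.
  rewrite /= p1 p2 q1 q2 !mul_block_col !mul_col_mx !mulmx0 !mulmx1 !mul0mx.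
  rewrite !addr0 !add0r !mul1mx; split=> //.
  have := S 1%N; rewrite m0 /= => /(_ isT) h.
  by rewrite h.
have [IH1 IH2] := IH (ltnW km); split=> //.
rewrite (dd_rec H) // (dd_rec H') // mulmxDr mulmxDl IH1 mulmxA IH2.
rewrite -!mulmxA; have -> : odd k.+3 = odd k.+1 by rewrite /= negbK.
congr (_ + _ *m _).
have := S k.+2; rewrite km /= => /(_ isT).
by case: (odd k) => /= ->.
Qed.

Lemma part3 (F : fieldType) (n m : nat)
    (A A' : nat -> 'M[F]_n) (phi phi' : nat -> 'M[F]_(n + n, n)) u0 a
    (U : nat -> 'M[F]_n) :
  (0 < m)%N -> diag_data m A phi -> diag_data m A' phi' ->
  (forall j, (1 <= j <= m.+1)%N -> block_mx a 0 0 u0 *m phi j = phi' j *m U j) ->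
  forall k, (1 <= k <= m)%N ->
   [/\ U k = (if odd k then u0 else a), U k.+1 = (if odd k.+1 then u0 else a) &
     forall j, (1 <= j <= k)%N ->
      if odd j then A' j *m a = u0 *m A j else A' j *m u0 = a *m A j].
Proof.
move=> m0 H H' Hu; elim=> [//|k IH] /andP[k1 km].
case: k IH k1 km => [|k] IH _ km.
  have [p1 p2] := dd_base m0 H; have [q1 q2] := dd_base m0 H'.
  have := Hu 1%N isT; have := Hu 2%N m0.
  rewrite p1 p2 q1 q2 !mul_block_col !mul_col_mx !mulmx0 !mulmx1 !mul0mx.
  rewrite !addr0 !add0r !mul1mx => /eq_col_mx[e2 e3] /eq_col_mx[_ e1].
  split=> // j /andP[j1 j2]; have -> : j = 1%N by apply/eqP; rewrite eqn_leq j1 j2.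
  by rewrite /= e2 e3.
have [IH1 IH2 IH3] := IH (ltnW km).
have := Hu k.+3 ltac:(lia).
rewrite (dd_rec H) // (dd_rec H') // mulmxDr mulmxDl.
rewrite (Hu k.+1 ltac:(lia)) mulmxA (Hu k.+2 ltac:(lia)) => /eqP; rewrite -subr_eq0 => /eqP E.
have : Defs.prefix A' k.+1 *m col_mx (U k.+1 - U k.+3) (U k.+2 *m A k.+2 - A' k.+2 *m U k.+3) = 0.
  rewrite (H' k.+1 ltac:(lia)).
  by rewrite mul_row_col !mulmxBr !mulmxA -[RHS]E opprD addrACA.
move/prefix_cancel/eqP; rewrite -col_mx0 => /eqP/eq_col_mx[/eqP f1 /eqP f2].
rewrite subr_eq0 in f1; rewrite subr_eq0 in f2.
have U3 : U k.+3 = (if odd k.+3 then u0 else a) by rewrite -(eqP f1) IH1 /= negbK.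
split=> // j /andP[j1]; rewrite leq_eqVlt => /orP[/eqP -> | jk].
  move: f2; rewrite IH2 U3 /=; case: (odd k) => /= /eqP ->; by [].
by apply: IH3; rewrite j1 -ltnS.
Qed.

Theorem mainTheorem8 (F : fieldType) (n m : nat)
    (A A' : nat -> 'M[F]_n) (phi phi' : nat -> 'M[F]_(n + n, n)) :
  (0 < m)%N ->
  cont A m \in unitmx -> cont A' m \in unitmx ->
  diag_data m A phi -> diag_data m A' phi' ->
  (* (u1,u2) in the set gives a morphism F -> F' *)
  (forall u1 u2, sol m A A' u1 u2 ->
     let: (u0, v, u) := mor_of m u1 u2 in is_mor phi phi' u0 v u) /\
  (* the correspondence is injective *)
  (forall u1 u2 w1 w2, sol m A A' u1 u2 -> sol m A A' w1 w2 ->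
     mor_of m u1 u2 = mor_of m w1 w2 -> u1 = w1 /\ u2 = w2) /\
  (* and surjective onto all morphisms F -> F' *)
  (forall u0 v u, is_mor phi phi' u0 v u ->
     exists u1 u2, sol m A A' u1 u2 /\ (u0, v, u) = mor_of m u1 u2).
Proof.
move=> m0 _ _ H H'; split; [|split].
- move=> u1 u2 S /=; split.
    rewrite /psi mul_mx_row mul_row_block !mulmx0 !mul0mx mulmx1 !mul1mx.
    by rewrite !add0r.
  move=> i; rewrite ffunE.
  have [im|im] := ltnP i m.
    by have [] := part1 m0 H H' S (k := i.+1) ltac:(lia).
  have ei : nat_of_ord i = m by have := ltn_ord i; lia.
  by have [_] := part1 m0 H H' S (k := m) ltac:(lia); rewrite ei.
- move=> u1 u2 w1 w2 _ _ [e1 /eq_block_mx[e2 _ _ _] _]; by [].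
move=> u0 v u [Hpsi Hphi].
rewrite -(submxK v) in Hpsi Hphi *.
move: Hpsi; rewrite /psi mul_mx_row mul_row_block !mulmx0 !mul0mx mulmx1 !mul1mx !add0r.
move=> /eq_row_mx[ec ed].
rewrite -ec -ed in Hphi *.
have hb := Hphi ord0; have [p1 _] := dd_base m0 H; have [q1 _] := dd_base m0 H'.
move: hb; rewrite /= p1 q1 mul_block_col mul_col_mx !mulmx0 !mulmx1 mul0mx ?addr0 ?add0r.
move=> /eq_col_mx[eb _]; rewrite eb in Hphi *.
have Hu : forall j, (1 <= j <= m.+1)%N ->
    block_mx (ulsubmx v) 0 0 u0 *m phi j = phi' j *m u (inord j.-1).
  move=> j hj; have := Hphi (inord j.-1); rewrite inordK; last by lia.
  by have -> : j.-1.+1 = j by lia.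
have P := part3 m0 H H' Hu.
exists u0, (ulsubmx v); split.
  by move=> k hk; have [_ _] := P m ltac:(lia); apply.
rewrite /mor_of; congr (_, _, _); apply/ffunP => i; rewrite ffunE.
have [im|im] := ltnP i m.
  by have [] := P i.+1 ltac:(lia); rewrite /= inord_val.
have ei : nat_of_ord i = m by have := ltn_ord i; lia.
have [_ e _] := P m ltac:(lia); move: e => /=.
have -> : (inord m : 'I_m.+1) = i by apply/val_inj; rewrite /= inordK ?ei.
by rewrite ei.
Qed.
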